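(* Let $R$ be the holistic system robustness random variable (defined in the context), with distribution $\pi_R$, so that $\mathbb{P}_{\pi_R}[-R\le a]=1$. Let $\alpha\in(0,1]$ and define \[ L(x,\mu,t)=t\left(\mu+\frac{1}{\alpha}\max\left\{\frac{x}{t}-\mu,0\right\}\right),\qquad u_b(\mu,t)=L(a,\mu,t). \] For $N$ independent samples $r_1,\dots,r_N$ of $R$, let $\zeta^*_N(\mu,t)=\max_{1\le k\le N}L(-r_k,\mu,t)$. Then for all $\epsilon\in[0,1]$, \[ \mathbb{P}^N_{\pi_R}\left[r^*_C\triangleq\inf_{\mu\in\mathbb{R},\ t>0}\zeta^*_N(\mu,t)(1-\epsilon)+u_b(\mu,t)\epsilon\ \ge\ \mathrm{CVaR}_\alpha(-R)\right]\ge 1-(1-\epsilon)^N. \]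
   Context: System setting: $\dot x = f(x,u)+\xi$, $x\in\mathcal{X}\subset\mathbb{R}^n$, $u=U(x,\theta)\in\mathcal{U}\subset\mathbb{R}^m$, $\theta\in\Theta\subset\mathbb{R}^p$ a parameter fixed along a trajectory, and $\xi$ stochastic noise with unknown distribution $\pi_\xi(x,u,t)$. $x^\theta$ denotes the resulting closed-loop state signal in $\mathcal{S}=\{s:\mathbb{R}_{\ge0}\to\mathbb{R}^n\}$ from an initial condition $x_0\in\mathcal{X}_0\subseteq\mathcal{X}$. A robustness metric is a function $\rho:\mathcal{S}\to[-a,b]$ with $a,b>0$ such that $\rho(s)\ge0$ only for signals exhibiting desired properties. The holistic system robustness $R$ is the scalar random variable whose samples are $r=\rho(x^\theta)$, where $(x_0,\theta)$ is sampled uniformly from $\mathcal{X}_0\times\Theta$ (and the trajectory is subject to the noise). Conditional-Value-at-Risk: $\mathrm{CVaR}_\alpha(Z)=\inf_{z\in\mathbb{R}} z+\frac{\mathbb{E}[\max(Z-z,0)]}{\alpha}$. $\zeta^*_N(\mu,t)$ is the solution of $\min_\zeta\zeta$ s.t. $\zeta\ge L(-r_i,\mu,t)$ for all $i$; $\mathbb{P}^N_{\pi_R}$ is the $N$-fold product measure of the i.i.d. sample. *)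

(* Defs.v *)
From HB Require Import structures.
From mathcomp Require Import all_boot all_order all_algebra.
From mathcomp Require Import all_classical all_reals all_analysis.
Set Implicit Arguments. Unset Strict Implicit. Unset Printing Implicit Defensive.
Import Order.TTheory GRing.Theory Num.Theory.
Local Open Scope classical_set_scope.
Local Open Scope ring_scope.

Definition Lfun {R : realType} (alpha x mu t : R) : R :=
  t * (mu + alpha^-1 * Num.max (x / t - mu) 0).

Definition ub {R : realType} (alpha a mu t : R) : R := Lfun alpha a mu t.

(* zeta*_N(mu,t) = max_{k} L(-r_k, mu, t) (as an extended real; N >= 1 in use) *)
Definition zetaN {R : realType} (N : nat) (alpha : R) (r : 'I_N -> R) (mu t : R)
  : \bar R :=
  (\big[maxe/-oo%E]_(k < N) (Lfun alpha (- r k) mu t)%:E)%E.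

Definition CVaR_neg {R : realType} (piR : probability R R) (alpha : R) : \bar R :=
  ereal_inf (range (fun z : R =>
    (z%:E + (\int[piR]_x (Num.max (- x - z) 0)%:E) * (alpha^-1)%:E)%E)).

Definition mutually_independent {d} {T : measurableType d} {R : realType}
  (P : probability T R) (N : nat) (X : 'I_N -> T -> R) : Prop :=
  forall (J : {set 'I_N}) (B : 'I_N -> set R),
    (forall i, measurable (B i)) ->
    P (\bigcap_(i in [set i | i \in J]) (X i @^-1` B i)) =
    (\prod_(i in J) P (X i @^-1` B i))%E.

Definition rC {R : realType} (N : nat) (alpha a eps : R) (r : 'I_N -> R) : \bar R :=
  ereal_inf [set (zetaN alpha r mu t * (1 - eps)%:E + (ub alpha a mu t * eps)%:E)%E
            | mu in [set: R] & t in [set t : R | 0 < t]].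

(* Main.v *)
Set Warnings "-all".
Require Import Defs.
From HB Require Import structures.
From mathcomp Require Import all_boot all_order all_algebra.
From mathcomp Require Import all_classical all_reals all_analysis.
Import Order.TTheory GRing.Theory Num.Theory.
Local Open Scope classical_set_scope.
Local Open Scope ring_scope.
From mathcomp Require Import measurable_realfun ring lra.
Require Import Defs.

Lemma L_alt (R : realType) (alpha x mu t : R) : 0 < t ->
  Lfun alpha x mu t = t * mu + alpha^-1 * Num.max (x - t * mu) 0.
Proof.
move=> t0; rewrite /Lfun mulrDr mulrCA maxr_pMr ?ltW // mulr0 mulrBr.
by rewrite mulrCA mulfV ?gt_eqF // mulr1.
Qed.

Lemma L_mono (R : realType) (alpha x y mu t : R) : 0 < alpha -> 0 < t -> x <= y ->
  Lfun alpha x mu t <= Lfun alpha y mu t.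
Proof.
move=> a0 t0 xy; rewrite !L_alt //; rewrite lerD2l; apply: ler_wpM2l; first by rewrite invr_ge0 ltW.
by rewrite ge_max !le_max lexx orbT andbT lerD2r xy.
Qed.

Lemma zeta_min (R : realType) (N : nat) (alpha : R) (r : 'I_N -> R) k1 mu t :
  0 < alpha -> 0 < t -> (forall k, r k1 <= r k) ->
  zetaN alpha r mu t = (Lfun alpha (- r k1) mu t)%:E.
Proof.
move=> a0 t0 hk; apply/le_anti/andP; split.
- rewrite /zetaN; apply: (big_ind (fun y => y <= _)%E); first exact: leNye.
  + by move=> x y hx hy; rewrite ge_max hx hy.
  + by move=> k _; rewrite lee_fin; apply: L_mono => //; rewrite lerN2.
- by rewrite /zetaN (bigD1 k1) //= le_max lexx.
Qed.

Lemma max_mono (R : realType) (u v z : R) : u <= v ->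
  Num.max (u - z) 0 <= Num.max (v - z) 0.
Proof. by move=> uv; rewrite ge_max !le_max lexx orbT andbT lerD2r uv. Qed.

Lemma key (R : realType) (piR : probability R R) (a alpha eps m0 mu t : R) :
  0 < alpha -> 0 <= eps <= 1 -> piR [set x : R | - x <= a] = 1%E ->
  (piR `]-oo, m0[%classic <= eps%:E)%E -> 0 < t ->
  (CVaR_neg piR alpha <= (Lfun alpha (- m0) mu t)%:E * (1 - eps)%:E
      + (ub alpha a mu t * eps)%:E)%E.
Proof.
move=> a0 /andP[e0 e1] ha hp t0.
set z := t * mu.
set A := Num.max (- m0 - z) 0; set B := Num.max (a - z) 0; set C := Num.min A B.
set S := `]-oo, m0[%classic.
have mS : measurable S by exact: measurable_itv.
pose p := fine (piR S).
have pE : piR S = p%:E by rewrite fineK // fin_num_measure.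
have p0 : 0 <= p by rewrite -lee_fin -pE.
have pe : p <= eps by rewrite -lee_fin -pE.
have A0 : 0 <= A by rewrite le_max lexx orbT.
have B0 : 0 <= B by rewrite le_max lexx orbT.
have C0 : 0 <= C by rewrite le_min A0 B0.
have CB : C <= B by rewrite ge_min lexx orbT.
have CA : C <= A by rewrite ge_min lexx.
have mD : measurable [set x : R | - x <= a].
  have -> : [set x : R | - x <= a] = `[- a, +oo[%classic.
    by apply/seteqP; split => x /=; rewrite in_itv /= andbT lerNl.
  exact: measurable_itv.
have Ip : (\int[piR]_x (Num.max (- x - z) 0)%:E <= (C + (B - C) * p)%:E)%E.
  apply: (@le_trans _ _ (\int[piR]_x ((C + (B - C) * \1_S x)%:E))%E).
    apply: ae_ge0_le_integral => //.
    - by move=> x _; rewrite lee_fin le_max lexx orbT.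
    - apply/measurable_EFinP; apply: measurable_maxr => //.
      by apply: measurable_funB => //; apply: measurable_funN.
    - move=> x _; rewrite lee_fin addr_ge0 // mulr_ge0 // ?subr_ge0 //.
    - apply/measurable_EFinP; apply: measurable_funD => //.
      by apply: measurable_funM => //; apply: measurable_indic.
    - exists (~` [set x : R | - x <= a]); split.
      + exact: measurableC.
      + by have := probability_setC piR mD; rewrite ha subee.
      + move=> x /= hx hxa; apply: hx => _.
        rewrite lee_fin indicE.
        have h2 : Num.max (- x - z) 0 <= B by exact: max_mono.
        have [xS|xS] := boolP (x \in S).
          by rewrite mulr1 addrCA subrr addr0.
        rewrite mulr0 addr0 le_min h2 andbT; apply: max_mono.
        move: xS; rewrite /S notin_setE /= => /negP; rewrite in_itv /= -leNgt => xS.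
        by rewrite lerN2.
  under eq_integral do rewrite EFinD EFinM.
  rewrite ge0_integralD //; last 2 first.
  - by move=> x _; rewrite lee_fin mulr_ge0 ?subr_ge0 // indicE.
  - apply/measurable_EFinP; apply: measurable_funM => //.
  rewrite ge0_integralZl //; last 2 first.
  - by apply/measurable_EFinP; exact: measurable_indic.
  - by rewrite lee_fin subr_ge0.
  have -> : (\int[piR]_x (\1_S x)%:E = p%:E)%E.
    by rewrite integral_indic // setIT; exact: pE.
  rewrite integral_cst //; set one := (X in (C%:E * X)%E); have -> : one = 1%E by exact: probability_setT.
  by rewrite mule1 -EFinM -EFinD.
have ai0 : 0 < alpha^-1 by rewrite invr_gt0.
apply: (@le_trans _ _ ((z + (C + (B - C) * p) * alpha^-1)%:E)).
  apply: (@le_trans _ _ (z%:E + (\int[piR]_x (Num.max (- x - z) 0)%:E) * (alpha^-1)%:E)%E).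
    by apply: ereal_inf_lbound; exists z.
  rewrite EFinD leeD2l // EFinM; apply: lee_wpmul2r => //; rewrite lee_fin ltW //.
rewrite /ub !L_alt // -/z -/A -/B -!EFinM -EFinD lee_fin.
have h1 : C + (B - C) * p <= A * (1 - eps) + B * eps.
  have : (B - C) * p <= (B - C) * eps by rewrite ler_wpM2l // subr_ge0.
  have : C * (1 - eps) <= A * (1 - eps) by rewrite ler_wpM2r // subr_ge0.
  lra.
have h2 : 0 <= alpha^-1 * (A * (1 - eps) + B * eps - (C + (B - C) * p)).
  by apply: mulr_ge0; [exact: ltW | rewrite subr_ge0].
lra.
Qed.

Lemma upset_cases (R : realType) (U : set R) :
  (forall x y, x <= y -> U x -> U y) ->
  U = set0 \/ U = setT \/
  exists s, U = `[s, +oo[%classic \/ U = `]s, +oo[%classic.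
Proof.
move=> hU.
have [U0|/set0P [u Uu]] := eqVneq U set0; first by left.
right; case: (pselect (has_lbound U)) => hlb; last first.
  left; apply/seteqP; split => x // _.
  apply: contrapT => nUx; apply: hlb; exists x => y Uy.
  rewrite leNgt; apply/negP => yx; apply: nUx; exact: hU (ltW yx) Uy.
right; exists (inf U).
have sl : forall x, U x -> inf U <= x by move=> x Ux; exact: ge_inf.
have sr : forall x, inf U < x -> U x.
  move=> x sx; have xs0 : 0 < x - inf U by rewrite subr_gt0.
  have [e Ue] := @inf_adherent _ U (x - inf U) xs0 (conj (ex_intro _ u Uu) hlb).
  rewrite addrCA subrr addr0 => ex; exact: hU (ltW ex) Ue.
case: (pselect (U (inf U))) => Us; [left|right]; apply/seteqP; split => x /=;
  rewrite in_itv /= andbT.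
- by move/sl.
- by rewrite le_eqVlt => /orP[/eqP <-|/sr].
- by move=> Ux; rewrite lt_neqAle sl // andbT; apply/eqP => ex; apply: Us; rewrite ex.
- exact: sr.
Qed.

Lemma upset_measurable (R : realType) (U : set R) :
  (forall x y, x <= y -> U x -> U y) -> measurable U.
Proof.
move=> /upset_cases [->|[->|[s [->|->]]]] //; exact: measurable_itv.
Qed.

Lemma argmin_ex (R : realType) (N : nat) (r : 'I_N -> R) : (0 < N)%N ->
  exists k1, forall k, r k1 <= r k.
Proof.
move=> hN; pose i0 := Ordinal hN.
case: (@arg_minP _ R _ i0 xpredT r) => // k1 _ hk.
by exists k1 => k; exact: hk.
Qed.

Lemma pC (R : realType) (piR : probability R R) (A : set R) (eps : R) :
  measurable A -> (eps%:E <= piR A)%E -> (piR (~` A) <= (1 - eps)%:E)%E.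
Proof.
move=> mA; rewrite probability_setC //.
rewrite -[piR A]fineK ?fin_num_measure // lee_fin => h.
by rewrite -EFinB lee_fin; lra.
Qed.

Lemma U_bound (R : realType) (piR : probability R R) (d : measure_display)
  (T : measurableType d) (P : probability T R) (X0 : {RV P >-> R}) (eps : R) :
  0 <= eps <= 1 ->
  (forall B, measurable B -> P (X0 @^-1` B) = piR B) ->
  (piR [set s | (eps%:E < piR `]-oo, s[%classic)%E] <= (1 - eps)%:E)%E.
Proof.
move=> /andP[e0 e1] hX.
have cdfE : forall s, cdf X0 s = piR `]-oo, s]%classic.
  by move=> s; exact: (hX _ (measurable_itv _)).
have hlt : forall s, (piR `]-oo, s[%classic <= piR `]-oo, s]%classic)%E.
  move=> s; apply: le_measure; rewrite ?inE; try exact: measurable_itv.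
  by move=> z /=; rewrite !in_itv /= => /ltW.
set U := [set s | _].
have hU : forall x y, x <= y -> U x -> U y.
  move=> x y xy; rewrite /U /= => h; apply: (lt_le_trans h).
  apply: le_measure; rewrite ?inE; try exact: measurable_itv.
  by move=> z /=; rewrite !in_itv /= => zx; exact: lt_le_trans zx xy.
have [->|[hUT|[s [hUs|hUs]]]] := upset_cases _ _ hU.
- by rewrite measure0 lee_fin subr_ge0.
- have : (eps%:E <= 0)%E.
    apply: (cvge_to_ge (cvg_cdfNy0 X0)); apply: nearW => x.
    have : U x by rewrite hUT.
    rewrite /U /= cdfE => h; exact: (le_trans (ltW h) (hlt x)).
  rewrite lee_fin => e00.
  have -> : eps = 0 by apply/le_anti; rewrite e00 e0.
  by rewrite subr0; apply: probability_le1; exact: upset_measurable hU.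
- have Us : U s by rewrite hUs /= in_itv /= lexx.
  have -> : U = ~` `]-oo, s[%classic.
    rewrite hUs; apply/seteqP; split => x /=; rewrite !in_itv /= ?andbT.
      by move=> sx; apply/negP; rewrite -leNgt.
    by move=> /negP; rewrite -leNgt.
  by apply: pC; [exact: measurable_itv | exact: ltW].
- have : (eps%:E <= cdf X0 s)%E.
    apply: (cvge_to_ge (@cdf_right_continuous _ _ _ _ X0 s)).
    near=> x.
    have : U x.
      rewrite hUs /= in_itv /= andbT.
      by near: x; exact: nbhs_right_gt.
    rewrite /U /= cdfE => h; exact: (le_trans (ltW h) (hlt x)).
  rewrite cdfE => h.
  have -> : U = ~` `]-oo, s]%classic.
    rewrite hUs; apply/seteqP; split => x /=; rewrite !in_itv /= ?andbT.
      by move=> sx; apply/negP; rewrite -ltNge.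
    by move=> /negP; rewrite -ltNge.
  by apply: pC; [exact: measurable_itv | exact: h].
Unshelve. all: by end_near.
Qed.

Lemma rC_min (R : realType) (N : nat) (alpha a eps : R) (r : 'I_N -> R) k1 :
  0 < alpha -> (forall k, r k1 <= r k) ->
  rC alpha a eps r = rC alpha a eps (fun _ : 'I_N => r k1).
Proof.
move=> al0 hk; rewrite /rC; congr ereal_inf; apply/seteqP; split => _ [mu _ [t t0 <-]];
  exists mu => //; exists t => //.
- by rewrite (zeta_min _ _ _ _ k1 _ _ al0 t0 hk) (zeta_min _ _ _ (fun _ : 'I_N => r k1) k1 _ _ al0 t0 (fun _ => lexx _)).
- by rewrite (zeta_min _ _ _ _ k1 _ _ al0 t0 hk) (zeta_min _ _ _ (fun _ : 'I_N => r k1) k1 _ _ al0 t0 (fun _ => lexx _)).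
Qed.

Lemma K_mono (R : realType) (N : nat) (alpha a eps : R) (i0 : 'I_N) x y :
  0 < alpha -> eps <= 1 -> x <= y ->
  (rC alpha a eps (fun _ : 'I_N => y) <= rC alpha a eps (fun _ : 'I_N => x))%E.
Proof.
move=> al0 e1 xy; apply: le_ereal_inf_tmp => _ [mu _ [t t0 <-]].
apply: ge_ereal_inf; eexists; first by exists mu => //; exists t.
rewrite (zeta_min _ _ _ (fun _ : 'I_N => x) i0 _ _ al0 t0 (fun _ => lexx _)).
rewrite (zeta_min _ _ _ (fun _ : 'I_N => y) i0 _ _ al0 t0 (fun _ => lexx _)).
rewrite leeD2r //; apply: lee_wpmul2r; first by rewrite lee_fin subr_ge0.
by rewrite lee_fin; apply: L_mono => //; rewrite lerN2.
Qed.

Theorem corollary5 (R : realType) (piR : probability R R) (a alpha eps : R)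
  (d : measure_display) (T : measurableType d) (P : probability T R)
  (N : nat) (X : 'I_N -> {RV P >-> R}) :
  0 < a ->
  piR [set x : R | - x <= a] = 1%E ->
  0 < alpha <= 1 ->
  0 <= eps <= 1 ->
  (0 < N)%N ->
  mutually_independent P (fun k => (X k : T -> R)) ->
  (forall k (B : set R), measurable B -> P (X k @^-1` B) = piR B) ->
  (P [set w | (CVaR_neg piR alpha <= rC alpha a eps (fun k => X k w))%E]
     >= (1 - (1 - eps) ^+ N)%:E)%E.
Proof.
move=> ha0 hpiR /andP[al0 al1] heps hN hind hdist.
have e1 : eps <= 1 by case/andP: heps.
pose i0 := Ordinal hN.
set U := [set s : R | (eps%:E < piR `]-oo, s[%classic)%E].
have hU : forall x y, x <= y -> U x -> U y.
  move=> x y xy; rewrite /U /= => h; apply: (lt_le_trans h).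
  apply: le_measure; rewrite ?inE; try exact: measurable_itv.
  by move=> z /=; rewrite !in_itv /= => zx; exact: lt_le_trans zx xy.
have mU := upset_measurable _ _ hU.
set D := \bigcap_(i in [set i | i \in [set: 'I_N]%SET]) ((X i : T -> R) @^-1` U).
have mD : measurable D.
  apply: fin_bigcap_measurable; first exact: finite_finset.
  by move=> i _; exact: measurable_funPTI.
have PD := hind [set: 'I_N]%SET (fun _ => U) (fun _ => mU).
simpl in PD.
set K := fun s => rC alpha a eps (fun _ : 'I_N => s).
set V := [set s | (CVaR_neg piR alpha <= K s)%E].
have Vdown : forall x y, x <= y -> V y -> V x.
  move=> x y xy; rewrite /V /= => h; apply: (le_trans h).
  exact: K_mono.
have mV : measurable V.
  rewrite -[V]setCK; apply: measurableC; apply: upset_measurable.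
  move=> x y xy nVx Vy; apply: nVx; exact: Vdown xy Vy.
set E := [set w | _].
have EE : E = \bigcup_(k in [set: 'I_N]) (X k @^-1` V).
  apply/seteqP; split => w /=.
    have [k1 hk] := argmin_ex _ _ (fun k => X k w) hN.
    rewrite /E /= (rC_min _ _ _ _ _ (fun k => X k w) k1 al0 hk) => h.
    by exists k1.
  move=> [k _ Vk].
  have [k1 hk] := argmin_ex _ _ (fun k => X k w) hN.
  rewrite /E /= (rC_min _ _ _ _ _ (fun k => X k w) k1 al0 hk).
  exact: Vdown (hk k) Vk.
have mE : measurable E.
  rewrite EE; apply: fin_bigcup_measurable; first exact: finite_finset.
  by move=> i _; exact: measurable_funPTI.
have DE : ~` D `<=` E.
  move=> w /= nDw.
  have [k nUk] : exists k, ~ U (X k w).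
    apply: contrapT => hne; apply: nDw => k _; apply: contrapT => hk.
    by apply: hne; exists k.
  have [k1 hk] := argmin_ex _ _ (fun k => X k w) hN.
  have hp : (piR `]-oo, X k1 w[%classic <= eps%:E)%E.
    apply: (le_trans (y := piR `]-oo, X k w[%classic)).
      apply: le_measure; rewrite ?inE; try exact: measurable_itv.
      by move=> z /=; rewrite !in_itv /= => zx; exact: lt_le_trans zx (hk k).
    by move: nUk; rewrite /U /= => /negP; rewrite -leNgt.
  apply: le_ereal_inf_tmp => _ [mu _ [t t0 <-]].
  rewrite (zeta_min _ _ _ _ k1 _ _ al0 t0 hk).
  exact: key.
apply: (@le_trans _ _ (P (~` D))); last first.
  by apply: le_measure; rewrite ?inE //; exact: measurableC.
rewrite probability_setC // PD.
under eq_bigr do rewrite hdist //.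
have qb := U_bound _ piR _ _ P (X i0) eps heps (hdist i0).
rewrite -[piR U]fineK ?fin_num_measure // in qb *.
rewrite prodEFin prodr_const cardsT card_ord -EFinB lee_fin lerD2l lerN2.
rewrite lee_fin in qb.
apply: lerXn2r => //; rewrite nnegrE.
- by rewrite fine_ge0 // measure_ge0.
- by rewrite subr_ge0.
Qed.
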